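(* For nonnegative integers $a,c$ put $\overline{\mathrm{gf}}(a,c)=\mathrm{gf}(a,a,c,0)$ if $c\ge a$ and $\overline{\mathrm{gf}}(a,c)=0$ if $c<a$; explicitly, for $c\ge a$, $$\overline{\mathrm{gf}}(a,c)=(2q^a)^{a-c}\prod_{j=1}^{c-a}\frac{(Xq^{j-1}+Yq^{1-j})(1-q^{2a+2j})}{1-q^{2j}}.$$ Then for every positive integer $n$, every nonnegative integer $d$, and all nonnegative integers $a_1<a_2<\dots<a_n$ and $c_1<c_2<\dots<c_n$ with $a_i\le c_i$ for all $i$, $$\det\left(\overline{\mathrm{gf}}(a_i+d,c_j+d)\right)_{i,j=1}^n=\det\left(\overline{\mathrm{gf}}(a_i,c_j)\right)_{i,j=1}^n\cdot\prod_{k=1}^n\left(\frac{(q^{2d+2};q^2)_{c_k}}{q^{dc_k}(q^2;q^2)_{c_k}}\cdot\frac{q^{da_k}(q^2;q^2)_{a_k}}{(q^{2d+2};q^2)_{a_k}}\right).$$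
   Context: $X,Y,q$ are indeterminates and $(u;p)_n=\prod_{j=0}^{n-1}(1-up^j)$. Lattice paths in $\mathbb Z\times\mathbb Z$ use unit steps right, $(s,t)\to(s+1,t)$, and down, $(s,t)\to(s,t-1)$; a right step from $(s,t)$ has weight $\frac{Xq^{s-2t}+Yq^{2t-s}}{2}$, a down step weight $1$, a path's weight is the product of its step weights, and $\mathrm{gf}(a,b,c,d)$ is the sum of the weights of all paths from $(a,b)$ to $(c,d)$. *)

(* Defs.v *)
From HB Require Import structures.
From mathcomp Require Import all_boot all_order all_algebra.
Set Implicit Arguments. Unset Strict Implicit. Unset Printing Implicit Defensive.
Import Order.TTheory GRing.Theory Num.Theory.
Local Open Scope ring_scope.

(* The field Q(X,Y,q) of rational functions in three indeterminates,
   realized as the fraction field of Q[X][Y][q] (iterated polynomials). *)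
Definition Rpoly := {poly {poly {poly rat}}}.
Definition K := {fraction Rpoly}.

Definition Xv : K := tofrac (('X%:P)%:P : Rpoly).
Definition Yv : K := tofrac (('X%:P) : Rpoly).
Definition qv : K := tofrac ('X : Rpoly).

Definition qpoch (u p : K) (n : nat) : K := \prod_(j < n) (1 - u * p ^+ j).

Definition rweight (s t : int) : K :=
  (Xv * qv ^ (s - 2 * t) + Yv * qv ^ (2 * t - s)) / 2.

(* weight of a path starting at (s,t), encoded as a sequence of steps:
   true = right step (s,t)->(s+1,t), false = down step (s,t)->(s,t-1). *)
Fixpoint pweight (s t : int) (p : seq bool) : K :=
  match p with
  | [::] => 1
  | true :: p' => rweight s t * pweight (s + 1) t p'
  | false :: p' => pweight s (t - 1) p'
  end.

(* gf(a,b,c,d): sum of the weights of all lattice paths from (a,b) to (c,d).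
   Such a path exists iff a <= c and d <= b; it then consists of exactly
   c-a right steps and b-d down steps in some order. *)
Definition gf (a b c d : int) : K :=
  if (a <= c) && (d <= b) then
    \sum_(p : (`|c - a| + `|b - d|)%N.-tuple bool | count id p == `|c - a|%N)
       pweight a b p
  else 0.

Definition gfbar (a c : nat) : K :=
  if (a <= c)%N then gf a%:Z a%:Z c%:Z 0 else 0.

(* Main.v *)
Require Import Defs.
From HB Require Import structures.
From mathcomp Require Import all_boot all_order all_algebra.
From mathcomp Require Import ring zify.
Import Order.TTheory GRing.Theory Num.Theory.
Local Open Scope ring_scope.


Definition T (s t : int) (n m : nat) : K :=
  \sum_(p : n.-tuple bool | count id p == m) pweight s t p.

Lemma T0 s t m : T s t 0 m = (m == 0)%:R.
Proof.
rewrite /T big_mkcond (big_pred1 [tuple]) => [|p]; last by apply/esym/eqP; apply: tuple0.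
by case: m.
Qed.

Lemma TS s t n m : T s t n.+1 m =
  (if m is m'.+1 then rweight s t * T (s+1) t n m' else 0) + T s (t-1) n m.
Proof.
rewrite /T (reindex (fun x : bool * n.-tuple bool => [tuple of x.1 :: x.2])) /=; last first.
  exists (fun p : n.+1.-tuple bool => (thead p, [tuple of behead p])).
    by move=> [b p] _ /=; congr pair; apply: val_inj.
  by move=> p _; rewrite [RHS]tuple_eta.
rewrite big_mkcond -(pair_bigA _ (fun b (p : n.-tuple bool) =>
   if count id (b :: p) == m then pweight s t (b :: p) else 0)) big_bool /=.
congr (_ + _); last by rewrite [RHS]big_mkcond.
case: m => [|m].
  by rewrite big1.
by rewrite mulr_sumr [RHS]big_mkcond; apply: eq_bigr => p _; rewrite /= eqSS; case: ifP.
Qed.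

Lemma Tgt s t n m : (n < m)%N -> T s t n m = 0.
Proof.
move=> h; rewrite /T big1 // => p /eqP hp.
by move: (count_size id p); rewrite size_tuple hp leqNgt h.
Qed.



Lemma qv_neq0 : qv != 0.
Proof. rewrite /qv tofrac_eq0; by rewrite polyX_eq0. Qed.

Lemma two_neq0 : (2 : K) != 0.
Proof.
have -> : (2 : K) = tofrac (((2%:R : rat)%:P%:P)%:P : Rpoly) by rewrite !polyC_natr rmorph_nat.
by rewrite tofrac_eq0 !polyC_eq0 pnatr_eq0.
Qed.

Lemma oneBq_neq0 k : (0 < k)%N -> 1 - qv ^+ k != 0.
Proof.
move=> hk.
have -> : 1 - qv ^+ k = tofrac (1 - 'X^k : Rpoly) by rewrite tofracB tofrac1 tofracXn.
rewrite tofrac_eq0.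
rewrite subr_eq0; apply/eqP => H.
by move: (@size_polyXn {poly {poly rat}} k); rewrite -H size_poly1; clear H; case: k hk.
Qed.



Definition wq (e : K) : K := (Xv * e + Yv / e) / 2.
Definition D (x : nat) : K := qpoch (qv ^+ 2) (qv ^+ 2) x.

Lemma rweightE s t : rweight s t = wq (qv ^ (s - 2 * t)).
Proof. rewrite /rweight /wq invr_expz opprB; congr (_ * _). Qed.

Lemma D0 : D 0 = 1.
Proof. by rewrite /D /qpoch big_ord0. Qed.

Lemma DS x : D x.+1 = D x * (1 - (qv ^+ x.+1) ^+ 2).
Proof.
rewrite /D /qpoch big_ord_recr /=; congr (_ * (1 - _)).
by rewrite -exprS -!exprM mulnC.
Qed.

Lemma D_neq0 x : D x != 0.
Proof.
elim: x => [|x IH]; first by rewrite D0; apply: oner_neq0.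
rewrite DS; apply: mulf_neq0; first exact: IH.
rewrite -exprM; apply: oneBq_neq0; rewrite muln2 //.
Qed.

Lemma qz_add (z : int) (n : nat) : qv ^ (z + n%:Z) = qv ^ z * qv ^+ n.
Proof. by rewrite (expfzDr _ _ qv_neq0). Qed.

Lemma Tn0 n s t : T s t n 0 = 1.
Proof.
elim: n t => [|n IH] t; first by rewrite T0.
by rewrite TS add0r IH.
Qed.

Lemma Tnn n s t : T s t n n = \prod_(j < n) wq (qv ^ (s - 2 * t + j%:Z)).
Proof.
elim: n s => [|n IH] s; first by rewrite T0 big_ord0.
rewrite TS (@Tgt s (t-1) n n.+1 (ltnSn n)) addr0 IH big_ord_recl rweightE addr0; congr (_ * _).
apply: eq_bigr => j _; rewrite lift0; congr (wq (qv ^ _)); lia.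
Qed.



Lemma key_gen (F : fieldType) (X Y r x y q : F) : r != 0 -> x != 0 -> y != 0 -> q != 0 -> (2:F) != 0 ->
  let wq e := (X * e + Y / e) / 2 in
  wq r * (1 - (y * q) ^+ 2) * x * q + (1 - (x * q) ^+ 2) * y * q * wq (r * ((x * q) * (q * y)))
  = (1 - (y * x * (q * q)) ^+ 2) * wq (r * (x * q)).
Proof.
move=> r0 x0 y0 q0 t0 wq; rewrite /wq.
Time field.
by rewrite t0 q0 x0 r0 y0.
Qed.

Lemma key (r x y q : K) : r != 0 -> x != 0 -> y != 0 -> q != 0 ->
  wq r * (1 - (y * q) ^+ 2) * x * q + (1 - (x * q) ^+ 2) * y * q * wq (r * ((x * q) * (q * y)))
  = (1 - (y * x * (q * q)) ^+ 2) * wq (r * (x * q)).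
Proof. move=> r0 x0 y0 q0; exact: (@key_gen K Xv Yv r x y q r0 x0 y0 q0 two_neq0). Qed.

Lemma step_gen (F : fieldType) (T1 T2 Dm Dk Dn P z x y q W0 W1 W2 : F) :
 T1 * Dm * (Dk * (1 - (x*q)^+2)) * (z * y) = Dn * P ->
 T2 * (Dm * (1 - (y*q)^+2)) * Dk * (z * x) = Dn * (P * W2) ->
 W0 * (1 - (y*q)^+2) * x * q + (1 - (x*q)^+2) * y * q * W2 = (1 - (y*x*(q*q))^+2) * W1 ->
 (W0 * T1 + T2) * (Dm * (1 - (y*q)^+2)) * (Dk * (1 - (x*q)^+2)) * (z*x*y*q)
  = Dn * (1 - (y*x*(q*q))^+2) * (W1 * P).
Proof.
move=> h1 h2 hk.
transitivity (W0 * (1 - (y*q)^+2) * x * q * (T1 * Dm * (Dk * (1 - (x*q)^+2)) * (z * y)) +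
  (1 - (x*q)^+2) * y * q * (T2 * (Dm * (1 - (y*q)^+2)) * Dk * (z * x))); first ring.
rewrite h1 h2.
transitivity (Dn * P * (W0 * (1 - (y*q)^+2) * x * q + (1 - (x*q)^+2) * y * q * W2)); first ring.
rewrite hk; ring.
Qed.

Lemma Tclosed n : forall m k s t, (m + k)%N = n ->
  T s t n m * D m * D k * qv ^+ (k * m) =
  D n * \prod_(j < m) wq (qv ^ (s - 2 * t + k%:Z + j%:Z)).
Proof.
elim: n => [|n IH] m k s t hmk.
  have [-> ->] : m = 0%N /\ k = 0%N by lia.
  rewrite T0 D0 big_ord0 !mulr1; reflexivity.
case: m hmk => [|m] hmk.
  rewrite add0n in hmk; subst k.
  rewrite Tn0 D0 big_ord0 muln0 expr0 !mul1r !mulr1; reflexivity.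
case: k hmk => [|k] hmk.
  have ? : n = m by lia.
  subst n.
  rewrite Tnn D0 mul0n expr0 !mulr1 mulrC; congr (_ * _).
  apply: eq_bigr => j _; rewrite addr0; reflexivity.
have IH1 := IH m k.+1 (s + 1) t ltac:(lia).
have IH2 := IH m.+1 k s (t - 1) ltac:(lia).
rewrite TS.
set P := \prod_(j < m) wq (qv ^ ((s - 2 * t) + (k.+2 + j)%N%:Z)).
have E1 : \prod_(j < m) wq (qv ^ (s + 1 - 2 * t + k.+1%:Z + j%:Z)) = P.
  apply: eq_bigr => j _; congr (wq (qv ^ _)); lia.
have E2 : \prod_(j < m.+1) wq (qv ^ (s - 2 * (t - 1) + k%:Z + j%:Z)) =
   P * wq (qv ^ ((s - 2 * t) + (k.+2 + m)%N%:Z)).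
  rewrite big_ord_recr /=; congr (_ * _); last by congr (wq (qv ^ _)); lia.
  apply: eq_bigr => j _; congr (wq (qv ^ _)); rewrite /=; lia.
have E3 : \prod_(j < m.+1) wq (qv ^ (s - 2 * t + k.+1%:Z + j%:Z)) =
   wq (qv ^ ((s - 2 * t) + k.+1%:Z)) * P.
  rewrite big_ord_recl /=; congr (_ * _); first by congr (wq (qv ^ _)); lia.
  apply: eq_bigr => j _; congr (wq (qv ^ _)); rewrite /bump /=; lia.
rewrite E1 in IH1; rewrite E2 in IH2; rewrite E3 rweightE.
rewrite !qz_add in IH2 *.
have p1 : qv ^+ (k.+1 * m.+1) = qv ^+ (k * m) * qv ^+ k * qv ^+ m * qv.
  by rewrite -!exprD -[qv in RHS]expr1 -exprD; congr (_ ^+ _); lia.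
have p2 : qv ^+ (k.+1 * m) = qv ^+ (k * m) * qv ^+ m.
  by rewrite -!exprD; congr (_ ^+ _); lia.
have p3 : qv ^+ (k * m.+1) = qv ^+ (k * m) * qv ^+ k.
  by rewrite -!exprD; congr (_ ^+ _); lia.
have p4 : qv ^+ (k.+2 + m) = qv ^+ k * qv * (qv * qv ^+ m).
  by rewrite -[qv in RHS]expr1 -!exprD; congr (_ ^+ _); lia.
have p5 : qv ^+ n.+1 = qv ^+ m * qv ^+ k * (qv * qv).
  by rewrite -[qv in RHS]expr1 -!exprD; congr (_ ^+ _); lia.
have hm : qv ^+ m.+1 = qv ^+ m * qv by rewrite exprSr.
have hk : qv ^+ k.+1 = qv ^+ k * qv by rewrite exprSr.
rewrite p1 !DS p5 hm hk in IH1 IH2 *.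
rewrite p2 in IH1; rewrite p3 p4 in IH2.
apply: step_gen IH1 IH2 _.
apply: key.
- exact: expfz_neq0 qv_neq0.
- exact: expf_neq0 qv_neq0.
- exact: expf_neq0 qv_neq0.
- exact: qv_neq0.
Qed.



Lemma gfbarE a c : (a <= c)%N -> gfbar a c = T a a ((c - a) + a) (c - a).
Proof.
move=> hac; rewrite /gfbar hac /gf.
rewrite ifT; last by apply/andP; split; [rewrite lez_nat | exact: le0z_nat].
rewrite subzn // subr0 !absz_nat; reflexivity.
Qed.

Lemma gfbar_closed a c : (a <= c)%N ->
  gfbar a c * D (c - a) * D a * qv ^+ (a * (c - a)) =
  D c * \prod_(j < c - a) wq (qv ^ (j%:Z)).
Proof.
move=> hac; rewrite gfbarE // (@Tclosed _ (c - a) a a a (erefl _)) subnK //; congr (_ * _).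
apply: eq_bigr => j _; congr (wq (qv ^ _)); lia.
Qed.

Definition Pd (d x : nat) : K := qpoch (qv ^+ (2 * d + 2)) (qv ^+ 2) x.

Lemma DdP d x : D (d + x) = D d * Pd d x.
Proof.
rewrite /D /Pd /qpoch big_split_ord /=; congr (_ * _).
apply: eq_bigr => j _; congr (1 - _); rewrite -!exprM -!exprD; congr (_ ^+ _); lia.
Qed.

Lemma Pd_neq0 d x : Pd d x != 0.
Proof.
apply/negP => /eqP h; move: (D_neq0 (d + x)); rewrite DdP h mulr0 eqxx; discriminate.
Qed.

Lemma entry_gen (F : fieldType) (G0 G1 Dm Da Dd Dc Pa Pc W A B C : F) :
  Dm != 0 -> Da != 0 -> Dd != 0 -> Dc != 0 -> Pa != 0 -> Pc != 0 ->
  A != 0 -> B != 0 -> C != 0 ->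
  G0 * Dm * Da * A = Dc * W ->
  G1 * Dm * (Dd * Pa) * (A * B) = (Dd * Pc) * W ->
  G1 = (C * Da) / Pa * G0 * (Pc / ((B * C) * Dc)).
Proof.
move=> hDm hDa hDd hDc hPa hPc hA hB hC h0 h1.
have e1 : G1 = Dd * Pc * W / (Dm * (Dd * Pa) * (A * B)).
  rewrite -h1; field; by rewrite hDm hDd hPa hA hB.
have e0 : G0 = Dc * W / (Dm * Da * A).
  rewrite -h0; field; by rewrite hDm hDa hA.
rewrite e1 e0; field; by rewrite hDm hDa hDd hDc hPa hA hB hC.
Qed.

Definition fF (d x : nat) : K := Pd d x / (qv ^+ (d * x) * D x).
Definition hF (d x : nat) : K := (qv ^+ (d * x) * D x) / Pd d x.

Lemma entry a c d : gfbar (a + d) (c + d) = hF d a * gfbar a c * fF d c.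
Proof.
case: (leqP a c) => hac; last first.
  rewrite /gfbar ifF; last by apply/negbTE; rewrite -ltnNge ltn_add2r.
  rewrite ifF; last by apply/negbTE; rewrite -ltnNge.
  by rewrite mulr0 mul0r.
have h0 := gfbar_closed _ _ hac.
have h1 := gfbar_closed _ _ (leq_add hac (leqnn d)).
rewrite subnDr in h1.
set m := (c - a)%N in h0 h1.
have hc : c = (m + a)%N by rewrite /m subnK.
rewrite (addnC a d) (addnC c d) !DdP in h1.
have pA : qv ^+ ((d + a) * m) = qv ^+ (a * m) * qv ^+ (d * m).
  by rewrite -exprD; congr (_ ^+ _); lia.
have pC : qv ^+ (d * c) = qv ^+ (d * m) * qv ^+ (d * a).
  by rewrite -exprD; congr (_ ^+ _); lia.
rewrite pA in h1.
rewrite /hF /fF pC (addnC a d) (addnC c d).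
eapply (@entry_gen K _ _ _ _ _ _ _ _ _ _ _ _ _ _ _ _ _ _ _ _ _ h0 h1).
Unshelve.
all: try (apply: D_neq0).
all: try (apply: Pd_neq0).
all: try (apply: expf_neq0; exact: qv_neq0).
Qed.



Theorem mainTheorem8 (n d : nat) (a c : 'I_n -> nat) :
  (0 < n)%N ->
  (forall i j : 'I_n, (i < j)%N -> (a i < a j)%N) ->
  (forall i j : 'I_n, (i < j)%N -> (c i < c j)%N) ->
  (forall i : 'I_n, (a i <= c i)%N) ->
  \det (\matrix_(i < n, j < n) gfbar (a i + d) (c j + d)) =
  \det (\matrix_(i < n, j < n) gfbar (a i) (c j)) *
  \prod_(k < n)
    ((qpoch (qv ^+ (2 * d + 2)) (qv ^+ 2) (c k) /
        (qv ^+ (d * c k) * qpoch (qv ^+ 2) (qv ^+ 2) (c k))) *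
     ((qv ^+ (d * a k) * qpoch (qv ^+ 2) (qv ^+ 2) (a k)) /
        qpoch (qv ^+ (2 * d + 2)) (qv ^+ 2) (a k))).
Proof.
move=> _ _ _ _.
set M := \matrix_(i < n, j < n) gfbar (a i) (c j).
have -> : \matrix_(i < n, j < n) gfbar (a i + d) (c j + d) =
  diag_mx (\row_i hF d (a i)) *m M *m diag_mx (\row_j fF d (c j)).
  apply/matrixP => i j; rewrite mul_mx_diag mul_diag_mx !mxE entry; reflexivity.
rewrite !det_mulmx !det_diag.
have -> : \prod_(k < n)
    ((qpoch (qv ^+ (2 * d + 2)) (qv ^+ 2) (c k) /
        (qv ^+ (d * c k) * qpoch (qv ^+ 2) (qv ^+ 2) (c k))) *
     ((qv ^+ (d * a k) * qpoch (qv ^+ 2) (qv ^+ 2) (a k)) /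
        qpoch (qv ^+ (2 * d + 2)) (qv ^+ 2) (a k))) =
  \prod_(k < n) fF d (c k) * \prod_(k < n) hF d (a k).
  rewrite -big_split; apply: eq_bigr => k _; reflexivity.
rewrite (eq_bigr (fun i => hF d (a i))); last by move=> i _; rewrite mxE.
rewrite [X in _ * X](eq_bigr (fun i => fF d (c i))); last by move=> i _; rewrite mxE.
rewrite (mulrC (\prod_(i < n) hF d (a i))) -mulrA (mulrC (\prod_(i < n) hF d (a i))); reflexivity.
Qed.
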